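(* In the setting below, fix $x_0\in\mathcal{X}$ and suppose $P(\limsup_{n\to\infty}f(X_n)=\infty\mid x_0)=1$. Let $H\subseteq\mathcal{X}^\infty$ be the set of paths $w$ for which $Y_n(w)$ converges to a finite limit, and suppose $P(H\mid x_0)=1$. Then $C$ is $P(\cdot\mid x_0)$-recurrent.
   Context: $\mathcal{X}$ is a Polish space with Borel $\sigma$-algebra $\mathcal{B}$; $X=(X_0,X_1,\dots)$ is a Markov chain on $\mathcal{X}$ with transition kernel $T(\cdot\mid y)$; $P(\cdot\mid x_0)$ is the law on $\mathcal{X}^\infty$ of the chain started at $X_0=x_0$. $C\in\mathcal{B}$; $\tau_C$ is the smallest $n\ge1$ with $X_n\in C$ ($\tau_C=\infty$ if there is none); $E_C=\{\tau_C<\infty\}$. $C$ is $P(\cdot\mid x_0)$-recurrent if $P(E_C\mid x_0)=1$. $f:\mathcal{X}\to[0,\infty)$ is Borel measurable and $Y_n=f(X_{\tau_C\wedge n})$, $n=0,1,2,\dots$. *)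

(* Defs.v *)
From HB Require Import structures.
From mathcomp Require Import all_boot all_order all_algebra.
From mathcomp Require Import all_classical all_reals all_analysis.
Set Implicit Arguments. Unset Strict Implicit. Unset Printing Implicit Defensive.
Import Order.TTheory GRing.Theory Num.Theory.
Import numFieldNormedType.Exports.
Local Open Scope classical_set_scope.
Local Open Scope ring_scope.

Section Polish.
Context {R : realType} {T : Type}.

Definition is_metric (dist : T -> T -> R) : Prop :=
  [/\ (forall x y, 0 <= dist x y),
      (forall x y, dist x y = 0 <-> x = y),
      (forall x y, dist x y = dist y x) &
      (forall x y z, dist x z <= dist x y + dist y z)].

Definition metric_open (dist : T -> T -> R) : set (set T) :=
  [set U | forall x, U x -> exists e : R, 0 < e /\ [set y | dist x y < e] `<=` U].

Definition metric_complete (dist : T -> T -> R) : Prop :=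
  forall u : nat -> T,
    (forall e : R, 0 < e -> exists N, forall m n, (N <= m)%N -> (N <= n)%N ->
        dist (u m) (u n) < e) ->
    exists l, forall e : R, 0 < e -> exists N, forall n, (N <= n)%N -> dist (u n) l < e.

Definition metric_separable (dist : T -> T -> R) : Prop :=
  exists D : set T, countable D /\
    forall x (e : R), 0 < e -> exists y, D y /\ dist x y < e.
End Polish.

Definition polish_borel (R : realType) (d : measure_display) (T : measurableType d) : Prop :=
  exists dist : T -> T -> R,
    [/\ is_metric dist, metric_complete dist, metric_separable dist &
        forall A : set T, measurable A <-> <<s metric_open dist >> A].

Fixpoint fdd_kernel (R : realType) (d : measure_display) (T : measurableType d)
  (k : R.-ker T ~> T) (As : seq (set T)) (x : T) : \bar R :=
  match As with
  | [::] => 1%E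
  | A :: As' => (\int[k x]_(y in A) fdd_kernel k As' y)%E
  end.

(* This determines the law of (X_n) on the path space: it is P(. | x0). *)
Definition markov_chain_from (R : realType) (d : measure_display) (T : measurableType d)
  (dO : measure_display) (Omega : measurableType dO) (P : probability Omega R)
  (k : R.-ker T ~> T) (x0 : T) (X : nat -> Omega -> T) : Prop :=
  [/\ (forall n, measurable_fun setT (X n)),
      P [set w | X 0%N w = x0] = 1%E &
      forall As : seq (set T), (forall A, A \in As -> measurable A) ->
        P [set w | forall i, (i < size As)%N -> nth setT As i (X i.+1 w)]
        = fdd_kernel k As x0].

Definition hit_pred (d : measure_display) (T : measurableType d) (Omega : Type)
  (X : nat -> Omega -> T) (C : set T) (w : Omega) : pred nat :=
  fun n => (0 < n)%N && (X n w \in C).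

(* tau_C w = Some n, n the least n >= 1 with X_n(w) in C; None encodes infinity *)
Definition tauC (d : measure_display) (T : measurableType d) (Omega : Type)
  (X : nat -> Omega -> T) (C : set T) (w : Omega) : option nat :=
  match pselect (exists n, hit_pred X C w n) with
  | left h => Some (ex_minn h)
  | right _ => None
  end.

Definition tauC_min (d : measure_display) (T : measurableType d) (Omega : Type)
  (X : nat -> Omega -> T) (C : set T) (n : nat) (w : Omega) : nat :=
  match tauC X C w with Some t => minn t n | None => n end.

Definition Yproc (R : realType) (d : measure_display) (T : measurableType d) (Omega : Type)
  (X : nat -> Omega -> T) (C : set T) (f : T -> R) (n : nat) (w : Omega) : R :=
  f (X (tauC_min X C n w) w).

Definition E_C (d : measure_display) (T : measurableType d) (Omega : Type)
  (X : nat -> Omega -> T) (C : set T) : set Omega :=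
  [set w | tauC X C w <> None].

(* Main.v *)
Require Import Defs.
From HB Require Import structures.
From mathcomp Require Import all_boot all_order all_algebra.
From mathcomp Require Import all_classical all_reals all_analysis.
From mathcomp Require Import measurable_realfun.
From mathcomp Require Import zify ring lra.
Import Order.TTheory GRing.Theory Num.Theory.
Import numFieldNormedType.Exports.
Local Open Scope classical_set_scope.
Local Open Scope ring_scope.

Section helpers.
Context (d : measure_display) (T : measurableType d) (Omega : Type)
  (X : nat -> Omega -> T) (C : set T).

Lemma tauC_minP m j w : tauC_min X C m w = j <->
  [/\ (j <= m)%N, ((j < m)%N -> hit_pred X C w j) &
      (forall i, (i < j)%N -> ~~ hit_pred X C w i)].
Proof.
rewrite /tauC_min /tauC; case: pselect => [h|nh].
  case: ex_minnP => t ht tmin; split.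
    move=> mj; subst j; have [tm|mt] := leqP t m.
      split=> [//| _ |i it]; first exact: ht.
      by apply/negP => /tmin; rewrite leqNgt it.
    split=> [//| |i im]; first by rewrite ltnn.
    by apply/negP => /tmin; lia.
  case=> jm hj hi; have [jlt|jge] := ltnP j m.
    have tj := tmin _ (hj jlt).
    have : ~ (t < j)%N by move=> tj'; move: (hi _ tj'); rewrite ht.
    move=> ntj; have -> : t = j by lia.
    lia.
  have : ~ (t < j)%N by move=> tj'; move: (hi _ tj'); rewrite ht.
  move=> ntj; lia.
split.
  move=> mj; subst j; split=> [//| |i _]; first by rewrite ltnn.
  by apply/negP => hi; apply: nh; exists i.
case=> jm hj _; have [jlt|jge] := ltnP j m.
  by exfalso; apply: nh; exists j; exact: hj.
lia.
Qed.

End helpers.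

Section meas.
Context (R : realType) (d : measure_display) (T : measurableType d)
  (dO : measure_display) (Omega : measurableType dO)
  (X : nat -> Omega -> T) (C : set T) (f : T -> R)
  (mX : forall n, measurable_fun setT (X n)) (mC : measurable C)
  (mf : measurable_fun setT f).

Lemma hit_meas i : measurable [set w | hit_pred X C w i].
Proof.
rewrite /hit_pred; case: (ltnP 0 i) => i0 /=.
  have -> : [set w | X i w \in C] = X i @^-1` C.
    by apply/seteqP; split => w /=; rewrite inE.
  by rewrite -[X in measurable X]setTI; exact: mX.
have -> : [set w | false] = @set0 Omega by apply/seteqP; split => w.
exact: measurable0.
Qed.

Lemma tauC_min_meas m j : measurable [set w | tauC_min X C m w = j].
Proof.
have -> : [set w | tauC_min X C m w = j] =
  (if (j <= m)%N then setT else set0) `&`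
  (if (j < m)%N then [set w | hit_pred X C w j] else setT) `&`
  \bigcap_(i in [set i | (i < j)%N]) ~` [set w | hit_pred X C w i].
  apply/seteqP; split => w /=.
    move/tauC_minP => [jm hj hi]; split; first split.
    - by rewrite jm.
    - by case: ifP => // jm'; exact: hj.
    - by move=> i /= ij; apply/negP/hi.
  move=> [[a b] c]; apply/tauC_minP; split.
  - by move: a; case: ifP.
  - by move=> jlt; move: b; rewrite jlt.
  - by move=> i ij; apply/negP; exact: c.
apply: measurableI; first apply: measurableI.
- by case: ifP => _; [exact: measurableT|exact: measurable0].
- by case: ifP => _; [exact: hit_meas|exact: measurableT].
- by apply: bigcap_measurableType => i _; apply: measurableC; exact: hit_meas.
Qed.

Lemma Yproc_meas m : measurable_fun setT (fun w => Yproc X C f m w).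
Proof.
move=> _ S mS; rewrite setTI.
have -> : (fun w => Yproc X C f m w) @^-1` S = \bigcup_j
    ([set w | tauC_min X C m w = j] `&` (fun w => f (X j w)) @^-1` S).
  apply/seteqP; split => w /=.
    by move=> h; exists (tauC_min X C m w).
  by case=> j _ [/= <-].
apply: bigcupT_measurable => j; apply: measurableI; first exact: tauC_min_meas.
rewrite -[X in measurable X]setTI; apply: (measurableT_comp mf (mX j)) => //.
Qed.

End meas.

Lemma cvgn_cauchyE (R : realType) (u : R^nat) : cvgn u <->
  forall k : nat, exists N, forall n, (N <= n)%N -> `|u N - u n| < k.+1%:R^-1.
Proof.
split.
  move=> /cauchy_cvgP /cauchyP cu k.
  have e0 : 0 < k.+1%:R^-1 / 2 :> R by rewrite divr_gt0 // invr_gt0 ltr0n.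
  have [x [N _ HN]] := cu _ e0.
  exists N => n Nn.
  have := HN _ Nn; have := HN _ (leqnn N); rewrite -!ball_normE /ball_ /= => h1 h2.
  rewrite (_ : u N - u n = - (x - u N) + (x - u n)); last by ring.
  apply: (le_lt_trans (ler_normD _ _)); rewrite normrN.
  by rewrite [X in _ < X](splitr (k.+1%:R^-1)); exact: ltrD.
move=> H; apply/cauchy_cvgP/cauchy_exP => e e0.
have [k hk] := ltr_add_invr e0; rewrite add0r in hk.
have [N HN] := H k; exists (u N); exists N => // n /= Nn.
by rewrite -ball_normE /ball_ /=; exact: lt_trans (HN n Nn) hk.
Qed.

Theorem theorem4p1 (R : realType) (d : measure_display) (T : measurableType d)
  (dO : measure_display) (Omega : measurableType dO) (P : probability Omega R)
  (k : R.-pker T ~> T) (x0 : T) (X : nat -> Omega -> T)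
  (C : set T) (f : T -> R) :
  polish_borel R T ->
  markov_chain_from P k x0 X ->
  measurable C ->
  measurable_fun setT f -> (forall x, 0 <= f x) ->
  P [set w | limn_esup (fun n => (f (X n w))%:E) = +oo%E] = 1%E ->
  P [set w | cvgn (fun n => Yproc X C f n w)] = 1%E ->
  P (E_C X C) = 1%E.
Proof.
move=> _ [mX _ _] mC mf _ PA PB.
set A := [set w | _ = +oo%E] in PA.
set B := [set w | cvgn _] in PB.
have mA : measurable A.
  have -> : A = (fun w => limn_esup (fun n => (f (X n w))%:E)) @^-1` [set +oo%E] by [].
  have mg : measurable_fun setT (fun w => limn_esup (fun n => (f (X n w))%:E)).
    apply: (measurable_fun_limn_esup (f := fun n w => (f (X n w))%:E)) => n.
    by apply/measurable_EFinP; exact: measurableT_comp mf (mX n).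
  rewrite -[X in measurable X]setTI; apply: mg => //; exact: emeasurable_set1.
have mB : measurable B.
  have -> : B = \bigcap_(j in [set: nat]) \bigcup_(N in [set: nat])
     \bigcap_(n in [set n | (N <= n)%N])
       [set w | `|Yproc X C f N w - Yproc X C f n w| < j.+1%:R^-1].
    apply/seteqP; split => w /=.
      move/cvgn_cauchyE => H j _; have [N HN] := H j.
      by exists N => // n /= Nn; exact: HN.
    move=> H; apply/cvgn_cauchyE => j; have [N _ HN] := H j I.
    by exists N => n Nn; exact: HN.
  apply: bigcap_measurableType => j _; apply: bigcup_measurable => N _.
  apply: bigcap_measurableType => n _.
  have mg : measurable_fun setT
      (fun w => `|Yproc X C f N w - Yproc X C f n w|).
    have mY : forall m, measurable_fun setT (fun w => Yproc X C f m w).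
      by move=> m; apply: Yproc_meas.
    have := measurableT_comp (@normr_measurable R setT) (measurable_funB (mY N) (mY n)).
    by [].
  have -> : [set w | `|Yproc X C f N w - Yproc X C f n w| < j.+1%:R^-1] =
     (fun w => `|Yproc X C f N w - Yproc X C f n w|) @^-1` `]-oo, j.+1%:R^-1[.
    by apply/seteqP; split => w /=; rewrite in_itv.
  by rewrite -[X in measurable X]setTI; apply: mg => //; exact: measurable_itv.
have mE : measurable (E_C X C).
  have -> : E_C X C = \bigcup_i [set w | hit_pred X C w i].
    apply/seteqP; split => w; rewrite /E_C /tauC /=.
      by case: pselect => // -[i hi] _; exists i.
    by case=> i _ hi; case: pselect => // nh; exfalso; apply: nh; exists i.
  by apply: bigcupT_measurable => i; exact: hit_meas.
have sub : A `&` B `<=` E_C X C.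
  move=> w [Aw Bw]; rewrite /E_C /= => hN.
  have Yw : (fun n => Yproc X C f n w) = (fun n => f (X n w)).
    by apply/funext => n; rewrite /Yproc /tauC_min hN.
  rewrite /B /= Yw in Bw.
  move/cvg_ex: Bw => [l ul].
  have ul' : (fun n => (f (X n w))%:E) @ \oo --> l%:E.
    by apply: cvg_EFin => //; exact: nearW.
  have [_ hl] := cvg_limn_einf_sup ul'.
  by move: Aw; rewrite /A /= hl.
have h0 : P (~` E_C X C) = 0%E.
  apply/eqP; rewrite eq_le measure_ge0 andbT.
  apply: (le_trans (le_measure _ _ _ (subsetC sub))).
  - by rewrite inE; exact: measurableC.
  - by rewrite inE; apply: measurableC; exact: measurableI.
  have hU : (P (~` A `|` ~` B) <= P (~` A) + P (~` B))%E :=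
    measureU2 P (measurableC mA) (measurableC mB).
  rewrite setCI; apply: le_trans hU _.
  rewrite (probability_setC P mA) (probability_setC P mB) PA PB subee //.
  by rewrite adde0.
have := probability_setC P (measurableC mE); rewrite setCK h0 => ->.
by rewrite sube0.
Qed.
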